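(* Let $\Lambda=E_8(-1)^{\oplus 2}\oplus H^{\oplus 3}$ be the K3 lattice, with bilinear form $(\ ,\ )$ extended $\mathbb{C}$-bilinearly to $\Lambda_{\mathbb{C}}=\Lambda\otimes\mathbb{C}$. Let $\varphi_{14}(x)=x^{14}-x^{11}-x^{10}+x^7-x^4-x^3+1$ and let $\delta$ be the root of $\varphi_{14}$ with $\delta\approx -0.9903988352300419-0.13823945592693967\,i$. Then there exist an automorphism $F$ of the lattice $\Lambda$ and an element $\sigma\in\Lambda_{\mathbb{C}}$ such that: (1) the characteristic polynomial of $F$ is $(x-1)^8\varphi_{14}(x)$; (2) $(\sigma,\sigma)=0$ and $(\sigma,\overline{\sigma})>0$; (3) $F(\sigma)=\delta\sigma$ (where $F$ also denotes its $\mathbb{C}$-linear extension).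
   Context: $H$ denotes the even unimodular lattice of signature $(1,1)$ and $E_8(-1)$ the even unimodular negative definite lattice of rank $8$. $\varphi_{14}$ is an irreducible reciprocal (Salem) polynomial; besides its real roots $\alpha_{14}=1.200026\ldots$ and $1/\alpha_{14}$ it has $12$ roots on the unit circle, and $\delta$ is the particular one specified by its approximate value. *)

(* Defs.v *)
From HB Require Import structures.
From mathcomp Require Import all_boot all_order all_algebra.
Set Implicit Arguments. Unset Strict Implicit. Unset Printing Implicit Defensive.
Import Order.TTheory GRing.Theory Num.Theory.
Local Open Scope ring_scope.

(* Gram matrix of E8(-1): minus the Cartan matrix of E8.
   Dynkin diagram (0-indexed): chain 0-2-3-4-5-6-7, and 1 attached to 3. *)
Definition e8_adj (i j : nat) : bool :=
  [|| (i == 0) && (j == 2), (i == 2) && (j == 3), (i == 3) && (j == 4),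
      (i == 4) && (j == 5), (i == 5) && (j == 6), (i == 6) && (j == 7)
    | (i == 1) && (j == 3)]%N.

Definition e8m (i j : nat) : int :=
  if i == j then -2 else if e8_adj i j || e8_adj j i then 1 else 0.

Definition hyp (i j : nat) : int := if i == j then 0 else 1.

(* K3 lattice Lambda = E8(-1) + E8(-1) + H + H + H on Z^22:
   coordinates 0..7, 8..15 : the two E8(-1); 16-17, 18-19, 20-21 : the three H. *)
Definition k3gram_nat (i j : nat) : int :=
  if (i < 8)%N && (j < 8)%N then e8m i j
  else if (8 <= i < 16)%N && (8 <= j < 16)%N then e8m (i - 8) (j - 8)
  else if (16 <= i)%N && (16 <= j)%N && ((i - 16) %/ 2 == (j - 16) %/ 2)%N
       then hyp ((i - 16) %% 2) ((j - 16) %% 2)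
  else 0.

Definition K3gram : 'M[int]_22 := \matrix_(i < 22, j < 22) k3gram_nat i j.

Definition k3formC (C : numClosedFieldType) (x y : 'cV[C]_22) : C :=
  (x^T *m map_mx (fun z : int => z%:~R) K3gram *m y) 0 0.

Definition phi14 : {poly int} :=
  'X^14 - 'X^11 - 'X^10 + 'X^7 - 'X^4 - 'X^3 + 1.

Definition lattice_aut (F : 'M[int]_22) : Prop :=
  F \in unitmx /\ F^T *m K3gram *m F = K3gram.

(* Main.v *)
Require Import Defs.
From HB Require Import structures.
From mathcomp Require Import all_boot all_order all_algebra.
Import Order.TTheory GRing.Theory Num.Theory.
Local Open Scope ring_scope.
From Stdlib Require Import ZArith Lia.
From mathcomp Require Import ssrZ ring lra.
Import Order.TTheory GRing.Theory Num.Theory.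
Local Open Scope ring_scope.
(* The proof constructs an explicit isometry F of the K3 lattice
   (identity on the first E8(-1), a Salem-type isometry on E8(-1)+H^3 built from
   Z[x]/phi14 with a twisted trace form), and an explicit eigenvector. *)
Definition Fl : seq (seq int) := [:: [:: 1; 0; 0; 0; 0; 0; 0; 0; 0; 0; 0; 0; 0; 0; 0; 0; 0; 0; 0; 0; 0; 0];
  [:: 0; 1; 0; 0; 0; 0; 0; 0; 0; 0; 0; 0; 0; 0; 0; 0; 0; 0; 0; 0; 0; 0];
  [:: 0; 0; 1; 0; 0; 0; 0; 0; 0; 0; 0; 0; 0; 0; 0; 0; 0; 0; 0; 0; 0; 0];
  [:: 0; 0; 0; 1; 0; 0; 0; 0; 0; 0; 0; 0; 0; 0; 0; 0; 0; 0; 0; 0; 0; 0];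
  [:: 0; 0; 0; 0; 1; 0; 0; 0; 0; 0; 0; 0; 0; 0; 0; 0; 0; 0; 0; 0; 0; 0];
  [:: 0; 0; 0; 0; 0; 1; 0; 0; 0; 0; 0; 0; 0; 0; 0; 0; 0; 0; 0; 0; 0; 0];
  [:: 0; 0; 0; 0; 0; 0; 1; 0; 0; 0; 0; 0; 0; 0; 0; 0; 0; 0; 0; 0; 0; 0];
  [:: 0; 0; 0; 0; 0; 0; 0; 1; 0; 0; 0; 0; 0; 0; 0; 0; 0; 0; 0; 0; 0; 0];
  [:: 0; 0; 0; 0; 0; 0; 0; 0; 3; -5; 1; 3; -1; -3; 3; 2; 0; 0; -3; 0; 6; 6];
  [:: 0; 0; 0; 0; 0; 0; 0; 0; 3; -5; 1; 3; 0; -4; 3; 1; 0; 0; -3; -1; 5; 6];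
  [:: 0; 0; 0; 0; 0; 0; 0; 0; 5; -8; 2; 4; 0; -6; 5; 3; 0; 0; -5; 0; 10; 10];
  [:: 0; 0; 0; 0; 0; 0; 0; 0; 6; -11; 3; 6; 0; -9; 7; 4; 0; 0; -7; 0; 13; 14];
  [:: 0; 0; 0; 0; 0; 0; 0; 0; 5; -9; 2; 5; 0; -7; 6; 3; 0; 0; -6; 1; 11; 12];
  [:: 0; 0; 0; 0; 0; 0; 0; 0; 4; -8; 2; 4; 0; -5; 4; 4; 0; 0; -5; 2; 10; 11];
  [:: 0; 0; 0; 0; 0; 0; 0; 0; 2; -5; 2; 2; 0; -3; 3; 2; 0; 0; -3; 1; 6; 7];
  [:: 0; 0; 0; 0; 0; 0; 0; 0; 2; -3; 1; 1; 0; -2; 2; 2; 0; 0; -2; 1; 4; 5];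
  [:: 0; 0; 0; 0; 0; 0; 0; 0; 0; 0; 0; 0; 0; 0; 0; -1; 1; 0; 0; -1; -1; -1];
  [:: 0; 0; 0; 0; 0; 0; 0; 0; -1; 0; 0; -1; 1; 1; -1; 0; 0; 2; 1; 2; -1; -1];
  [:: 0; 0; 0; 0; 0; 0; 0; 0; 0; 0; 0; 0; 0; 0; 0; -2; 1; 0; 0; -2; -2; -2];
  [:: 0; 0; 0; 0; 0; 0; 0; 0; 1; 0; 0; 1; -1; -1; 1; 0; 0; -1; -1; -2; 1; 1];
  [:: 0; 0; 0; 0; 0; 0; 0; 0; -2; 2; -1; -1; 1; 1; -1; -2; 0; 0; 2; -1; -4; -4];
  [:: 0; 0; 0; 0; 0; 0; 0; 0; -1; 2; 0; -1; 0; 1; -1; -2; 0; 0; 1; -1; -3; -3]].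
Definition Fil : seq (seq int) := [:: [:: 1; 0; 0; 0; 0; 0; 0; 0; 0; 0; 0; 0; 0; 0; 0; 0; 0; 0; 0; 0; 0; 0];
  [:: 0; 1; 0; 0; 0; 0; 0; 0; 0; 0; 0; 0; 0; 0; 0; 0; 0; 0; 0; 0; 0; 0];
  [:: 0; 0; 1; 0; 0; 0; 0; 0; 0; 0; 0; 0; 0; 0; 0; 0; 0; 0; 0; 0; 0; 0];
  [:: 0; 0; 0; 1; 0; 0; 0; 0; 0; 0; 0; 0; 0; 0; 0; 0; 0; 0; 0; 0; 0; 0];
  [:: 0; 0; 0; 0; 1; 0; 0; 0; 0; 0; 0; 0; 0; 0; 0; 0; 0; 0; 0; 0; 0; 0];
  [:: 0; 0; 0; 0; 0; 1; 0; 0; 0; 0; 0; 0; 0; 0; 0; 0; 0; 0; 0; 0; 0; 0];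
  [:: 0; 0; 0; 0; 0; 0; 1; 0; 0; 0; 0; 0; 0; 0; 0; 0; 0; 0; 0; 0; 0; 0];
  [:: 0; 0; 0; 0; 0; 0; 0; 1; 0; 0; 0; 0; 0; 0; 0; 0; 0; 0; 0; 0; 0; 0];
  [:: 0; 0; 0; 0; 0; 0; 0; 0; 4; -4; 2; -1; -2; 6; -4; 5; 4; 2; -4; 4; 6; 9];
  [:: 0; 0; 0; 0; 0; 0; 0; 0; 4; -5; 2; -1; -2; 7; -4; 5; 5; 3; -5; 6; 7; 10];
  [:: 0; 0; 0; 0; 0; 0; 0; 0; 7; -8; 3; -1; -4; 11; -6; 8; 7; 4; -7; 8; 11; 16];
  [:: 0; 0; 0; 0; 0; 0; 0; 0; 10; -11; 4; -2; -5; 16; -9; 11; 10; 6; -10; 12; 16; 22];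
  [:: 0; 0; 0; 0; 0; 0; 0; 0; 7; -9; 4; -2; -4; 13; -7; 9; 7; 5; -7; 10; 13; 17];
  [:: 0; 0; 0; 0; 0; 0; 0; 0; 6; -7; 3; -2; -3; 10; -5; 7; 5; 4; -5; 8; 10; 13];
  [:: 0; 0; 0; 0; 0; 0; 0; 0; 5; -6; 2; -1; -2; 7; -4; 6; 4; 3; -4; 6; 8; 10];
  [:: 0; 0; 0; 0; 0; 0; 0; 0; 3; -4; 1; 0; -2; 5; -3; 4; 2; 2; -2; 4; 5; 6];
  [:: 0; 0; 0; 0; 0; 0; 0; 0; 0; 0; 0; 0; 0; 0; 0; 0; 2; 0; -1; 0; 0; 0];
  [:: 0; 0; 0; 0; 0; 0; 0; 0; 0; 0; 0; 0; 0; 0; 0; 0; 0; 1; 0; 1; 0; 0];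
  [:: 0; 0; 0; 0; 0; 0; 0; 0; 0; 2; 0; 0; 0; -2; 1; -1; 2; -1; -2; -2; -1; -1];
  [:: 0; 0; 0; 0; 0; 0; 0; 0; 1; -1; 0; 0; 0; 1; -1; 1; 1; 0; -1; 0; 1; 2];
  [:: 0; 0; 0; 0; 0; 0; 0; 0; -2; 2; 0; 0; 1; -3; 2; -3; -1; -1; 1; -2; -3; -4];
  [:: 0; 0; 0; 0; 0; 0; 0; 0; -2; 3; -1; 0; 1; -3; 2; -2; -1; -1; 1; -2; -3; -4]].
Definition F14l : seq (seq int) := [:: [:: 3; -5; 1; 3; -1; -3; 3; 2; 0; 0; -3; 0; 6; 6];
  [:: 3; -5; 1; 3; 0; -4; 3; 1; 0; 0; -3; -1; 5; 6];
  [:: 5; -8; 2; 4; 0; -6; 5; 3; 0; 0; -5; 0; 10; 10];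
  [:: 6; -11; 3; 6; 0; -9; 7; 4; 0; 0; -7; 0; 13; 14];
  [:: 5; -9; 2; 5; 0; -7; 6; 3; 0; 0; -6; 1; 11; 12];
  [:: 4; -8; 2; 4; 0; -5; 4; 4; 0; 0; -5; 2; 10; 11];
  [:: 2; -5; 2; 2; 0; -3; 3; 2; 0; 0; -3; 1; 6; 7];
  [:: 2; -3; 1; 1; 0; -2; 2; 2; 0; 0; -2; 1; 4; 5];
  [:: 0; 0; 0; 0; 0; 0; 0; -1; 1; 0; 0; -1; -1; -1];
  [:: -1; 0; 0; -1; 1; 1; -1; 0; 0; 2; 1; 2; -1; -1];
  [:: 0; 0; 0; 0; 0; 0; 0; -2; 1; 0; 0; -2; -2; -2];
  [:: 1; 0; 0; 1; -1; -1; 1; 0; 0; -1; -1; -2; 1; 1];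
  [:: -2; 2; -1; -1; 1; 1; -1; -2; 0; 0; 2; -1; -4; -4];
  [:: -1; 2; 0; -1; 0; 1; -1; -2; 0; 0; 1; -1; -3; -3]].
Definition Bl : seq (seq int) := [:: [:: 0; 0; 0; 0; 0; 0; 0; 0; 0; 0; 0; 0; 0; -1];
  [:: 1; 0; 0; 0; 0; 0; 0; 0; 0; 0; 0; 0; 0; 0];
  [:: 0; 1; 0; 0; 0; 0; 0; 0; 0; 0; 0; 0; 0; 0];
  [:: 0; 0; 1; 0; 0; 0; 0; 0; 0; 0; 0; 0; 0; 1];
  [:: 0; 0; 0; 1; 0; 0; 0; 0; 0; 0; 0; 0; 0; 1];
  [:: 0; 0; 0; 0; 1; 0; 0; 0; 0; 0; 0; 0; 0; 0];
  [:: 0; 0; 0; 0; 0; 1; 0; 0; 0; 0; 0; 0; 0; 0];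
  [:: 0; 0; 0; 0; 0; 0; 1; 0; 0; 0; 0; 0; 0; -1];
  [:: 0; 0; 0; 0; 0; 0; 0; 1; 0; 0; 0; 0; 0; 0];
  [:: 0; 0; 0; 0; 0; 0; 0; 0; 1; 0; 0; 0; 0; 0];
  [:: 0; 0; 0; 0; 0; 0; 0; 0; 0; 1; 0; 0; 0; 1];
  [:: 0; 0; 0; 0; 0; 0; 0; 0; 0; 0; 1; 0; 0; 1];
  [:: 0; 0; 0; 0; 0; 0; 0; 0; 0; 0; 0; 1; 0; 0];
  [:: 0; 0; 0; 0; 0; 0; 0; 0; 0; 0; 0; 0; 1; 0]].
Definition Ql : seq (seq int) := [:: [:: 3; 0; -1; -1; 1; 0; 0; 0; 1; 0; -1; 0; 1; 1];
  [:: -2; 1; 2; -2; 1; 0; -1; 1; 0; 0; 1; 0; -1; -1];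
  [:: -1; -1; 0; 2; -2; 0; 1; 0; 0; 0; 0; 0; 0; 0];
  [:: 0; -1; -1; 2; -1; 0; 0; 0; 0; 0; 0; 0; 0; 0];
  [:: -1; 0; 0; 1; -1; 1; -1; 0; 0; 0; 0; 0; 0; 0];
  [:: 0; 1; -1; 0; 0; 0; 1; -2; 0; 0; 0; 0; -1; -1];
  [:: 0; 0; 0; -1; 2; -1; 0; 0; 0; 0; 0; 0; 0; 0];
  [:: 1; 0; 0; -1; 1; 0; 0; 0; 0; 0; 0; 0; 1; 0];
  [:: -1; 0; 2; -1; 0; 0; 0; 0; 0; 0; 0; 0; 0; 0];
  [:: 0; -1; 0; 1; -1; 0; 1; 0; 0; 0; 0; 0; 0; 1];
  [:: -1; 0; 0; 1; -1; 0; 0; 1; 0; 0; 0; 0; 0; 0];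
  [:: -1; -2; 0; 2; -2; 2; -1; 1; 0; 1; 0; 2; 1; 1];
  [:: 2; 1; -2; 0; 0; 0; 1; -2; 0; 0; 0; -1; -1; -1];
  [:: 0; 1; 1; -2; 2; -1; -1; 1; 0; 0; 0; 0; 0; 0]].
Definition Qil : seq (seq int) := [:: [:: 0; 0; -3; 3; -1; 1; -1; 1; 2; 1; 2; 0; 0; 0];
  [:: 0; 0; -3; 3; 0; 2; -1; 2; 2; 2; 3; 0; 0; 1];
  [:: 0; 0; -5; 5; -1; 2; -1; 2; 4; 2; 4; 0; 0; 0];
  [:: 0; 0; -7; 7; -1; 3; -1; 3; 5; 3; 6; 0; 0; 0];
  [:: 0; 0; -6; 5; -1; 2; 0; 2; 4; 2; 5; 0; 0; -1];
  [:: 0; 0; -5; 3; -1; 1; 0; 1; 3; 1; 4; 0; 0; -2];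
  [:: 0; 0; -3; 2; -1; 1; 0; 1; 2; 1; 3; 0; 0; -1];
  [:: 0; 0; -2; 1; -1; 0; 0; 0; 1; 0; 2; 0; 0; -1];
  [:: 1; 1; 1; 1; 1; 1; 0; 1; 0; 1; 0; 0; 0; 1];
  [:: 0; 0; 1; 0; 1; 0; 1; 1; 1; 1; 1; 1; 2; 2];
  [:: 0; 1; 1; 1; 1; 1; -1; 2; -1; 2; -1; 0; 0; 2];
  [:: 0; 0; -1; 1; -1; 1; -1; 0; 0; 0; 0; 0; -1; 0];
  [:: 0; 0; 2; -1; 1; 0; 0; 1; -1; 0; -1; 0; 0; 1];
  [:: 0; 0; 1; -1; 1; 0; 0; 0; -1; 1; -1; 0; 0; 1]].
Definition Sl : seq (seq Z) := [:: [:: (0)%Z; (0)%Z; (0)%Z; (0)%Z; (0)%Z; (0)%Z; (0)%Z; (0)%Z; (0)%Z; (0)%Z; (0)%Z; (0)%Z; (0)%Z; (0)%Z];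
  [:: (0)%Z; (0)%Z; (0)%Z; (0)%Z; (0)%Z; (0)%Z; (0)%Z; (0)%Z; (0)%Z; (0)%Z; (0)%Z; (0)%Z; (0)%Z; (0)%Z];
  [:: (0)%Z; (0)%Z; (0)%Z; (0)%Z; (0)%Z; (0)%Z; (0)%Z; (0)%Z; (0)%Z; (0)%Z; (0)%Z; (0)%Z; (0)%Z; (0)%Z];
  [:: (0)%Z; (0)%Z; (0)%Z; (0)%Z; (0)%Z; (0)%Z; (0)%Z; (0)%Z; (0)%Z; (0)%Z; (0)%Z; (0)%Z; (0)%Z; (0)%Z];
  [:: (0)%Z; (0)%Z; (0)%Z; (0)%Z; (0)%Z; (0)%Z; (0)%Z; (0)%Z; (0)%Z; (0)%Z; (0)%Z; (0)%Z; (0)%Z; (0)%Z];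
  [:: (0)%Z; (0)%Z; (0)%Z; (0)%Z; (0)%Z; (0)%Z; (0)%Z; (0)%Z; (0)%Z; (0)%Z; (0)%Z; (0)%Z; (0)%Z; (0)%Z];
  [:: (0)%Z; (0)%Z; (0)%Z; (0)%Z; (0)%Z; (0)%Z; (0)%Z; (0)%Z; (0)%Z; (0)%Z; (0)%Z; (0)%Z; (0)%Z; (0)%Z];
  [:: (0)%Z; (0)%Z; (0)%Z; (0)%Z; (0)%Z; (0)%Z; (0)%Z; (0)%Z; (0)%Z; (0)%Z; (0)%Z; (0)%Z; (0)%Z; (0)%Z];
  [:: (-4)%Z; (1)%Z; (-4)%Z; (5)%Z; (-2)%Z; (2)%Z; (-1)%Z; (-1)%Z; (4)%Z; (-1)%Z; (3)%Z; (-3)%Z; (0)%Z; (0)%Z];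
  [:: (-5)%Z; (1)%Z; (-4)%Z; (5)%Z; (-2)%Z; (0)%Z; (-1)%Z; (-1)%Z; (5)%Z; (0)%Z; (3)%Z; (-3)%Z; (0)%Z; (0)%Z];
  [:: (-7)%Z; (1)%Z; (-7)%Z; (8)%Z; (-4)%Z; (3)%Z; (-2)%Z; (-1)%Z; (7)%Z; (-1)%Z; (5)%Z; (-5)%Z; (0)%Z; (0)%Z];
  [:: (-10)%Z; (2)%Z; (-9)%Z; (11)%Z; (-6)%Z; (3)%Z; (-3)%Z; (-1)%Z; (10)%Z; (-1)%Z; (7)%Z; (-7)%Z; (0)%Z; (0)%Z];
  [:: (-7)%Z; (2)%Z; (-7)%Z; (8)%Z; (-6)%Z; (3)%Z; (-2)%Z; (1)%Z; (8)%Z; (-1)%Z; (5)%Z; (-6)%Z; (0)%Z; (0)%Z];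
  [:: (-5)%Z; (2)%Z; (-5)%Z; (6)%Z; (-5)%Z; (3)%Z; (-1)%Z; (2)%Z; (6)%Z; (-1)%Z; (3)%Z; (-5)%Z; (0)%Z; (0)%Z];
  [:: (-4)%Z; (1)%Z; (-4)%Z; (4)%Z; (-3)%Z; (2)%Z; (0)%Z; (1)%Z; (4)%Z; (-1)%Z; (2)%Z; (-3)%Z; (0)%Z; (0)%Z];
  [:: (-2)%Z; (1)%Z; (-2)%Z; (3)%Z; (-2)%Z; (2)%Z; (0)%Z; (1)%Z; (2)%Z; (-1)%Z; (1)%Z; (-2)%Z; (0)%Z; (0)%Z];
  [:: (-2)%Z; (-2)%Z; (-2)%Z; (-1)%Z; (1)%Z; (-1)%Z; (0)%Z; (-2)%Z; (-1)%Z; (-1)%Z; (0)%Z; (1)%Z; (1)%Z; (1)%Z];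
  [:: (0)%Z; (-1)%Z; (0)%Z; (-1)%Z; (1)%Z; (0)%Z; (0)%Z; (0)%Z; (-1)%Z; (1)%Z; (0)%Z; (1)%Z; (0)%Z; (0)%Z];
  [:: (-2)%Z; (-2)%Z; (-1)%Z; (-1)%Z; (3)%Z; (-2)%Z; (0)%Z; (-3)%Z; (-1)%Z; (0)%Z; (1)%Z; (1)%Z; (1)%Z; (0)%Z];
  [:: (-1)%Z; (1)%Z; (-1)%Z; (2)%Z; (-1)%Z; (0)%Z; (0)%Z; (-1)%Z; (2)%Z; (-1)%Z; (1)%Z; (-1)%Z; (0)%Z; (0)%Z];
  [:: (1)%Z; (-1)%Z; (1)%Z; (-3)%Z; (2)%Z; (-2)%Z; (1)%Z; (-1)%Z; (-2)%Z; (1)%Z; (-1)%Z; (2)%Z; (0)%Z; (0)%Z];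
  [:: (1)%Z; (-1)%Z; (2)%Z; (-2)%Z; (2)%Z; (-2)%Z; (0)%Z; (0)%Z; (-1)%Z; (1)%Z; (-1)%Z; (1)%Z; (0)%Z; (0)%Z]].
Definition msl : seq Z := [:: (0)%Z; (0)%Z; (0)%Z; (0)%Z; (0)%Z; (0)%Z; (0)%Z; (0)%Z; (0)%Z; (0)%Z; (0)%Z; (0)%Z; (0)%Z; (0)%Z; (0)%Z; (0)%Z; (-1)%Z; (0)%Z; (0)%Z; (0)%Z; (0)%Z; (0)%Z].
Definition lget (l : seq (seq int)) i j := nth 0 (nth [::] l i) j.
Definition mxl n (l : seq (seq int)) : 'M[int]_n := \matrix_(i < n, j < n) lget l i j.
Definition lmm n (a b : seq (seq int)) := mkseq (fun i => mkseq (fun j => foldr (fun k acc => lget a i k * lget b k j + acc) 0 (iota 0 n)) n) n.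
Definition ltr n (a : seq (seq int)) := mkseq (fun i => mkseq (fun j => lget a j i) n) n.
Definition lid n : seq (seq int) := mkseq (fun i => mkseq (fun j => (i == j)%:R) n) n.
Definition mxl_eqb n a b := all (fun i => all (fun j => lget a i j == lget b i j) (iota 0 n)) (iota 0 n).
Definition Kl := mkseq (fun i => mkseq (fun j => k3gram_nat i j) 22) 22.

Lemma sum_foldr (R : nmodType) n (f : nat -> R) :
  \sum_(k < n) f k = foldr (fun k acc => f k + acc) 0 (iota 0 n).
Proof.
rewrite -(big_mkord xpredT) /index_iota subn0.
by elim: (iota 0 n) => [|a s IH]; rewrite ?big_nil ?big_cons ?IH.
Qed.

Lemma lget_mk (n : nat) (f : nat -> nat -> int) (i j : nat) : (i < n)%nat -> (j < n)%nat ->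
  lget (mkseq (fun i => mkseq (fun j => f i j) n) n) i j = f i j.
Proof. by move=> hi hj; rewrite /lget nth_mkseq //= nth_mkseq. Qed.

Lemma mxl_mul n a b : mxl n a *m mxl n b = mxl n (lmm n a b).
Proof.
apply/matrixP => i j; rewrite !mxE lget_mk //.
under eq_bigr => k _ do rewrite !mxE.
by rewrite (@sum_foldr _ n (fun k => lget a i k * lget b k j)).
Qed.

Lemma mxl_tr n a : (mxl n a)^T = mxl n (ltr n a).
Proof. by apply/matrixP => i j; rewrite !mxE lget_mk. Qed.

Lemma mxl_id n : (1%:M : 'M[int]_n) = mxl n (lid n).
Proof. by apply/matrixP => i j; rewrite !mxE lget_mk. Qed.

Lemma all_iota2 (n m : nat) (P : nat -> nat -> bool) :
  all (fun i => all (fun j => P i j) (iota 0 m)) (iota 0 n) ->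
  forall (i : 'I_n) (j : 'I_m), P i j.
Proof.
move=> /allP H i j.
have Hi : (i : nat) \in iota 0 n by rewrite mem_iota add0n ltn_ord.
have Hj : (j : nat) \in iota 0 m by rewrite mem_iota add0n ltn_ord.
by move: (H _ Hi) => /allP; apply.
Qed.

Lemma mxl_eq n a b : mxl_eqb n a b -> mxl n a = mxl n b.
Proof.
move=> H; apply/matrixP => i j; rewrite !mxE.
exact: (eqP (@all_iota2 n n (fun i j => lget a i j == lget b i j) H i j)).
Qed.

Lemma K3gram_mxl : K3gram = mxl 22 Kl.
Proof. by apply/matrixP => i j; rewrite !mxE lget_mk. Qed.

Definition Fm : 'M[int]_22 := mxl 22 Fl.

Lemma Fm_aut : lattice_aut Fm.
Proof.
split.
  have H : Fm *m mxl 22 Fil = 1%:M.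
    by rewrite /Fm mxl_mul mxl_id; apply: mxl_eq; vm_compute.
  by case: (mulmx1_unit H).
rewrite /Fm K3gram_mxl mxl_tr !mxl_mul; apply: mxl_eq; vm_compute; reflexivity.
Qed.

Lemma char_poly_block (R : comNzRingType) (n1 n2 : nat) (A : 'M[R]_n1) (B : 'M[R]_n2) :
  char_poly (block_mx A 0 0 B) = char_poly A * char_poly B.
Proof.
rewrite /char_poly /char_poly_mx map_block_mx !map_mx0 (scalar_mx_block n1 n2 'X).
rewrite opp_block_mx add_block_mx !oppr0 !addr0 det_ublock //.
Qed.

Lemma char_poly1 (R : comNzRingType) (n : nat) : char_poly (1%:M : 'M[R]_n) = ('X - 1) ^+ n.
Proof.
rewrite char_poly_trig ?scalar_mx_is_trig //.
under eq_bigr => i _ do rewrite mxE eqxx /= polyC1.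
by rewrite prodr_const card_ord.
Qed.

Lemma char_poly_tr (R : comNzRingType) (n : nat) (A : 'M[R]_n) : char_poly A^T = char_poly A.
Proof.
rewrite /char_poly /char_poly_mx -[RHS]det_tr; congr (\det _).
by rewrite linearB /= tr_scalar_mx map_trmx.
Qed.

Lemma char_poly_sim (R : comNzRingType) (n : nat) (A P Pi : 'M[R]_n) :
  P *m Pi = 1%:M -> char_poly (Pi *m A *m P) = char_poly A.
Proof.
move=> H; have H' := mulmx1C H.
rewrite /char_poly /char_poly_mx.
have HX : ('X%:M : 'M[{poly R}]_n) = map_mx polyC Pi *m 'X%:M *m map_mx polyC P.
  by rewrite scalar_mxC -mulmxA -map_mxM H' map_mx1 mulmx1.
rewrite [in LHS]HX !map_mxM -mulmxBl -mulmxBr !det_mulmx mulrAC -det_mulmx -map_mxM H' map_mx1 det1 mul1r.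
done.
Qed.

Lemma cmpK (p : {poly int}) (n : nat) (M : 'M[int]_n) : p \is monic -> size p = n.+1 ->
  (forall i j : 'I_n, M i j = if (i : nat) == n.-1 then - p`_j else ((i.+1 == j)%:R)) ->
  char_poly M = p.
Proof.
move=> mon sz HM; have := companionmxK mon; rewrite /companionmx.
have e : (size p).-1 = n by rewrite sz.
move: (size p).-1 e => d e; subst n => <-; congr char_poly.
by apply/matrixP => i j; rewrite mxE HM.
Qed.

Definition phiL : seq int := [:: 1; 0; 0; -1; -1; 0; 0; 1; 0; 0; -1; -1; 0; 0; 1].

Lemma phi14_Poly : phi14 = Poly phiL.
Proof.
rewrite /phi14 /= !cons_poly_def polyC0 polyC1 polyCN polyC1.
rewrite !mul0r !add0r.
ring.
Qed.

Lemma phi14_monic : phi14 \is monic.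
Proof. by rewrite phi14_Poly monicE /lead_coef (@PolyK _ 0 phiL). Qed.
Lemma phi14_size : size phi14 = 15.
Proof. by rewrite phi14_Poly (@PolyK _ 0 phiL). Qed.

Lemma Fblock : (Fm : 'M_(8+14)) = block_mx 1%:M 0 0 (mxl 14 F14l).
Proof.
apply/matrixP => i j; rewrite mxl_id.
case: (split_ordP i) => i' ->; case: (split_ordP j) => j' ->.
- rewrite block_mxEul !mxE /=.
  exact: (eqP (@all_iota2 8 8 (fun i j => lget Fl i j == lget (lid 8) i j) (erefl true) i' j')).
- rewrite block_mxEur !mxE /=.
  exact: (eqP (@all_iota2 8 14 (fun i j => lget Fl i (8 + j) == 0) (erefl true) i' j')).
- rewrite block_mxEdl !mxE /=.
  exact: (eqP (@all_iota2 14 8 (fun i j => lget Fl (8 + i) j == 0) (erefl true) i' j')).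
- rewrite block_mxEdr !mxE /=.
  exact: (eqP (@all_iota2 14 14 (fun i j => lget Fl (8 + i) (8 + j) == lget F14l i j) (erefl true) i' j')).
Qed.

Lemma charF : char_poly Fm = ('X - 1) ^+ 8 * phi14.
Proof.
transitivity (char_poly (block_mx (1%:M : 'M[int]_8) 0 0 (mxl 14 F14l))).
  by rewrite -Fblock.
rewrite char_poly_block char_poly1; congr (_ * _).
have -> : mxl 14 F14l = mxl 14 Qil *m mxl 14 Bl *m mxl 14 Ql.
  by rewrite !mxl_mul; apply: mxl_eq; vm_compute.
rewrite char_poly_sim; last first.
  by rewrite mxl_mul mxl_id; apply: mxl_eq; vm_compute.
rewrite -char_poly_tr mxl_tr; apply: cmpK; [exact: phi14_monic|exact: phi14_size|].
move=> i j; rewrite mxE phi14_Poly coef_Poly.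
exact: (eqP (@all_iota2 14 14 (fun i j => lget (ltr 14 Bl) i j == if i == 13 then - nth 0 phiL j else (i.+1 == j)%:R) (erefl true) i j)).
Qed.

Fixpoint ladd (l1 l2 : seq Z) : seq Z := match l1, l2 with [::], _ => l2 | _, [::] => l1 | a::l1', b::l2' => (a+b)%Z :: ladd l1' l2' end.
Definition lscale (c : Z) (l : seq Z) := map (Z.mul c) l.
Fixpoint lmulp (l1 l2 : seq Z) : seq Z := if l1 is a :: l1' then ladd (lscale a l2) (0%Z :: lmulp l1' l2) else [::].
Definition allz (l : seq Z) := all (fun a => Z.eqb a 0) l.
Definition leqp (l1 l2 : seq Z) := allz (ladd l1 (lscale (-1) l2)).
Definition phiZ : seq Z := map Z_of_int phiL.
Definition lgetZ (l : seq (seq int)) i j := Z_of_int (lget l i j).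
Definition combo (i : nat) : seq Z :=
  foldr (fun k acc => ladd (lscale (lgetZ Fl i k) (nth [::] Sl k)) acc) [::] (iota 0 22).
Definition eigen_check : bool :=
  all (fun i => leqp (combo i) (ladd (0%Z :: nth [::] Sl i) (lscale (nth 0%Z msl i) phiZ))) (iota 0 22).
Lemma eigen_check_ok : eigen_check. Proof. by vm_compute. Qed.

Section Cplx.
Variable C : numClosedFieldType.
Definition zc (z : Z) : C := (int_of_Z z)%:~R.
Lemma zcD a b : zc (a + b)%Z = zc a + zc b.
Proof. by rewrite /zc (_ : (a + b)%Z = (a + b)%R) // !rmorphD. Qed.
Lemma zcM a b : zc (a * b)%Z = zc a * zc b.
Proof. by rewrite /zc (_ : (a * b)%Z = (a * b)%R) // !rmorphM. Qed.
Lemma zcN a : zc (- a)%Z = - zc a.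
Proof. by rewrite /zc (_ : (- a)%Z = (- a)%R) // !rmorphN. Qed.
Lemma zc0 : zc 0 = 0. Proof. by rewrite /zc. Qed.
Lemma zc1 : zc 1 = 1. Proof. by rewrite /zc. Qed.
Lemma zcm1 : zc (-1) = -1. Proof. by rewrite /zc (_ : int_of_Z (-1)%Z = -1) // rmorphN1. Qed.
Lemma zc_int (x : int) : zc (Z_of_int x) = x%:~R. Proof. by rewrite /zc Z_of_intK. Qed.

Fixpoint ev (d : C) (l : seq Z) : C := if l is a :: l' then zc a + d * ev d l' else 0.
Lemma ev_add d l1 l2 : ev d (ladd l1 l2) = ev d l1 + ev d l2.
Proof.
elim: l1 l2 => [|a l1 IH] [|b l2] /=; rewrite ?add0r ?addr0 //.
by rewrite IH zcD; ring.
Qed.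
Lemma ev_scale d c l : ev d (lscale c l) = zc c * ev d l.
Proof. elim: l => [|a l IH] /=; rewrite ?mulr0 // IH zcM; ring. Qed.
Lemma ev_mul d l1 l2 : ev d (lmulp l1 l2) = ev d l1 * ev d l2.
Proof. elim: l1 => [|a l1 IH] /=; rewrite ?mul0r // ev_add ev_scale /= IH zc0; ring. Qed.
Lemma ev_allz d l : allz l -> ev d l = 0.
Proof. elim: l => [|a l IH] //= /andP[/Z.eqb_spec -> /IH ->]; rewrite zc0; ring. Qed.
Lemma ev_leqp d l1 l2 : leqp l1 l2 -> ev d l1 = ev d l2.
Proof. by move=> /(ev_allz d); rewrite ev_add ev_scale zcm1 mulN1r => /eqP; rewrite subr_eq0 => /eqP. Qed.
Lemma ev_cons0 d l : ev d (0%Z :: l) = d * ev d l.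
Proof. by rewrite /= zc0 add0r. Qed.
Lemma ev_foldr d (s : seq nat) (g : nat -> seq Z) :
  foldr (fun k acc => ev d (g k) + acc) 0 s = ev d (foldr (fun k acc => ladd (g k) acc) [::] s).
Proof. by elim: s => [|a s IH] //=; rewrite ev_add IH. Qed.

Lemma ev_phi d : root (map_poly (fun z : int => z%:~R) phi14) d -> ev d phiZ = 0.
Proof.
move=> /rootP; rewrite /phi14 !raddfD !raddfN /= !map_polyXn rmorph1 !hornerE.
move=> H; rewrite -H /phiZ /= !zc1 !zcm1; ring.
Qed.

Definition sigma (d : C) : 'cV[C]_22 := \col_(i < 22) ev d (nth [::] Sl i).
Definition Fc : 'M[C]_22 := map_mx (fun z : int => z%:~R) Fm.

Lemma eigen d : root (map_poly (fun z : int => z%:~R) phi14) d -> Fc *m sigma d = d *: sigma d.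
Proof.
move=> hr; apply/matrixP => i j; rewrite !mxE.
under eq_bigr => k _ do rewrite !mxE -zc_int -ev_scale.
rewrite (@sum_foldr _ 22 (fun k => ev d (lscale (lgetZ Fl i k) (nth [::] Sl k)))) ev_foldr.
have := allP eigen_check_ok i; rewrite mem_iota add0n ltn_ord => /(_ isT) /(ev_leqp d).
rewrite /combo => ->; rewrite ev_add ev_cons0 ev_scale ev_phi // mulr0 addr0.
done.
Qed.
End Cplx.
Definition Rl : seq Z := [:: (-4)%Z; (-16)%Z; (-46)%Z; (-78)%Z; (-28)%Z; (96)%Z; (98)%Z; (-35)%Z; (-70)%Z; (4)%Z; (20)%Z; (0)%Z; (-2)%Z].

Fixpoint rexp (m : nat) (l : seq Z) : seq Z :=
  match l with [::] => [::]
  | a :: l' => ladd (lscale a (ncons m 0%Z [:: 1%Z])) (lmulp [:: 1%Z; 0%Z; 1%Z] (rexp m.-1 l')) end.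
Definition Tab (a b : nat) := lmulp (lscale (Z_of_int (k3gram_nat a b)) (nth [::] Sl a)) (rev (nth [::] Sl b)).
Definition inner (b : nat) := foldr (fun a acc => ladd (Tab a b) acc) [::] (iota 0 22).
Definition Pc : seq Z := foldr (fun b acc => ladd (inner b) acc) [::] (iota 0 22).
Lemma Pc_ok : leqp Pc (rexp 13 Rl). Proof. by vm_compute. Qed.
Lemma Sl_size : all (fun l => size l == 14) Sl. Proof. by vm_compute. Qed.

Section Cplx2.
Variable C : numClosedFieldType.
Local Notation zc := (zc C).
Local Notation ev := (@ev C).
Local Notation sigma := (@sigma C).
Local Notation Fc := (@Fc C).

Lemma zc_conj a : (zc a)^* = zc a.
Proof. by rewrite /zc rmorph_int. Qed.
Lemma ev_conj d l : (ev d l)^* = ev d^* l.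
Proof. elim: l => [|a l IH] /=; first by rewrite rmorph0. rewrite rmorphD rmorphM; congr (_ + _ * _); [exact: zc_conj | exact: IH]. Qed.
Lemma ev_ncons d m : ev d (ncons m 0%Z [:: 1%Z]) = d ^+ m.
Proof. elim: m => [|m IH] /=; first by rewrite zc1; ring. by rewrite zc0 IH add0r exprS. Qed.

Lemma ev_rexp d : d != 0 -> forall l m, (size l <= m.+1)%nat -> ev d (rexp m l) = d ^+ m * ev (d + d^-1) l.
Proof.
move=> hd; elim => [|a l IH] m hs; first by rewrite /= mulr0.
change (rexp m (a :: l)) with (ladd (lscale a (ncons m 0%Z [:: 1%Z])) (lmulp [:: 1%Z; 0%Z; 1%Z] (rexp m.-1 l))).
rewrite ev_add ev_scale ev_ncons ev_mul.
case: l IH hs => [|b l] IH hs; first by rewrite /= !mulr0 addr0; ring.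
case: m hs => [|m] hs //; rewrite IH //= zc1 zc0 !add0r !exprS; field; exact: hd.
Qed.

Lemma ev_rcons d s a : ev d (rcons s a) = ev d s + zc a * d ^+ size s.
Proof. elim: s => [|b s IH] /=; [ring | rewrite IH exprS; ring]. Qed.

Lemma ev_rev d : d != 0 -> forall l, ev d (rev l) = d ^+ (size l).-1 * ev d^-1 l.
Proof.
move=> hd; elim => [|a l IH]; first by rewrite /= mulr0.
rewrite rev_cons ev_rcons size_rev IH /=.
case: l IH => [|b l] IH /=; first by ring.
rewrite exprS; field; exact: hd.
Qed.

Definition sigmab (d : C) : 'cV[C]_22 := map_mx (fun z : C => z^*) (sigma d).

Lemma k3formE (x y : 'cV[C]_22) : k3formC x y = \sum_(b < 22) (\sum_(a < 22) x a 0 * (k3gram_nat a b)%:~R) * y b 0.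
Proof.
rewrite /k3formC mxE; apply: eq_bigr => b _; rewrite !mxE; congr (_ * _).
by apply: eq_bigr => a _; rewrite !mxE.
Qed.

Lemma form_isom (x y : 'cV[C]_22) : k3formC (Fc *m x) (Fc *m y) = k3formC x y.
Proof.
rewrite /k3formC trmx_mul.
have HG : map_mx (fun z : int => z%:~R) K3gram = Fc^T *m map_mx (fun z : int => z%:~R) K3gram *m Fc.
  by rewrite /Fc map_trmx -!map_mxM; case: Fm_aut => _ ->.
by rewrite [in RHS]HG !mulmxA.
Qed.

Lemma form_scale (a b : C) (x y : 'cV[C]_22) : k3formC (a *: x) (b *: y) = a * b * k3formC x y.
Proof. rewrite /k3formC linearZ /= [(a *: x)^T]linearZ /= -!scalemxAl !mxE; ring. Qed.

Lemma eigen_conj d : root (map_poly (fun z : int => z%:~R) phi14) d -> Fc *m sigmab d = d^* *: sigmab d.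
Proof.
move=> /eigen E; apply/matrixP => i j; have := congr1 (fun M : 'M[C]_(22,1) => (M i j)^*) E.
rewrite !mxE rmorph_sum rmorphM => <-; apply: eq_bigr => k _.
by rewrite !mxE rmorphM rmorph_int.
Qed.

Lemma Sl_size' (b : 'I_22) : size (nth [::] Sl b) = 14.
Proof. by apply/eqP; apply: (allP Sl_size); apply: mem_nth; rewrite (ltn_ord b). Qed.

Lemma H_eq d : d != 0 -> d^* = d^-1 -> k3formC (sigma d) (sigmab d) = ev (d + d^-1) Rl.
Proof.
move=> hd hc; apply: (mulfI (expf_neq0 13 hd)).
rewrite -ev_rexp // -(@ev_leqp C d _ _ Pc_ok) /Pc -(@ev_foldr C d (iota 0 22) inner).
rewrite -(@sum_foldr _ 22 (fun b => ev d (inner b))) k3formE mulr_sumr.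
apply: eq_bigr => b _; rewrite /inner -(@ev_foldr C d (iota 0 22) (fun a => Tab a b)).
rewrite -(@sum_foldr _ 22 (fun a => ev d (Tab a b))) mulr_suml mulr_sumr.
apply: eq_bigr => a _; rewrite /Tab ev_mul ev_scale zc_int ev_rev // Sl_size' /=.
rewrite !mxE ev_conj hc; ring.
Qed.
End Cplx2.
Definition betas : seq Z := [:: (132572702068244033596159868318)%Z; (1619381260981604607242025865560)%Z; (9060079148976150248342734930300)%Z; (30700939595104232372896019035000)%Z; (70179312777145709908631258381250)%Z; (114011938613973565922223374350000)%Z; (134982083103706928348616790125000)%Z; (117348297272362268219281328750000)%Z; (74350293193372975232459925781250)%Z; (33482184436524171001464296875000)%Z; (10172908188028176927988398437500)%Z; (1872393707601377441058984375000)%Z; (157885773249034864530761718750)%Z].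

Fixpoint lpow (l : seq Z) (k : nat) : seq Z := if k is k'.+1 then lmulp l (lpow l k') else [:: 1%Z].
Fixpoint bsum (i : nat) (bs : seq Z) : seq Z :=
  if bs is b :: bs' then ladd (lscale b (lmulp (lpow [:: 397%Z; 200%Z] i) (lpow [:: (-395)%Z; (-200)%Z] (12 - i)))) (bsum i.+1 bs') else [::].
Definition Kc : Z := (400 ^ 12)%Z.
Lemma bern_ok : leqp (lscale Kc Rl) (bsum 0 betas). Proof. by vm_compute. Qed.
Lemma betas_pos : all (fun b => Z.ltb 0 b) betas. Proof. by vm_compute. Qed.

Section Cplx3.
Variable C : numClosedFieldType.
Local Notation zc := (zc C).
Local Notation ev := (@ev C).

Lemma zc_gt0 b : Z.ltb 0 b -> 0 < zc b.
Proof.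
case: b => // p _; rewrite /zc ltr0z /= ltz_nat; apply/ssrnat.ltP; exact: Pos2Nat.is_pos.
Qed.

Lemma ev_lpow d l k : ev d (lpow l k) = ev d l ^+ k.
Proof. elim: k => [|k IH] /=; first by rewrite zc1; ring. by rewrite ev_mul IH exprS. Qed.

Lemma bsum_pos t i bs : 0 < ev t [:: 397%Z; 200%Z] -> 0 < ev t [:: (-395)%Z; (-200)%Z] ->
  all (fun b => Z.ltb 0 b) bs -> 0 <= ev t (bsum i bs) /\ (bs != [::] -> 0 < ev t (bsum i bs)).
Proof.
move=> h1 h2; elim: bs i => [|b bs IH] i /=; first by split.
move=> /andP[hb /IH hr]; case: (hr i.+1) => hr0 _.
have hp : 0 < zc b * ev t (lmulp (lpow [:: 397%Z; 200%Z] i) (lpow [:: (-395)%Z; (-200)%Z] (12 - i))).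
  by rewrite ev_mul !ev_lpow mulr_gt0 ?zc_gt0 // mulr_gt0 // exprn_gt0.
by rewrite ev_add ev_scale; split => [|_]; [apply: ltW|]; apply: ltr_wpDr.
Qed.

Lemma R_pos t : 0 < ev t [:: 397%Z; 200%Z] -> 0 < ev t [:: (-395)%Z; (-200)%Z] -> 0 < ev t Rl.
Proof.
move=> h1 h2; have := proj2 (@bsum_pos t 0 betas h1 h2 betas_pos) isT.
rewrite -(@ev_leqp C t _ _ bern_ok) ev_scale.
have hK : 0 < zc Kc by apply: zc_gt0; vm_compute.
by rewrite (pmulr_rgt0 _ hK).
Qed.
End Cplx3.


Fixpoint ddl (l : seq Z) : seq Z := if l is a :: l' then ladd l' (0%Z :: ddl l') else [::].
Definition absl (l : seq Z) := map Z.abs l.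
Fixpoint Klst (l : seq Z) : seq Z := if l is a :: l' then ladd (lscale 2 (ddl (absl l'))) (0%Z :: Klst l') else [::].

Fixpoint gh (A B N : Z) (l : seq Z) : Z * Z * Z :=
  match l with [::] => (0%Z, 0%Z, 1%Z)
  | c :: l' => let '(p, q, D) := gh A B N l' in ((c * D * N + A * p - B * q)%Z, (A * q + B * p)%Z, (D * N)%Z) end.

Section Num5.
Variable C : numClosedFieldType.
Local Notation zc := (zc C).
Local Notation ev := (@ev C).

Lemma int_of_Z_ge0 z : Z.leb 0 z -> 0 <= int_of_Z z.
Proof. by case: z. Qed.
Lemma int_of_Z_gt0 z : Z.ltb 0 z -> 0 < int_of_Z z.
Proof. case: z => // p _; rewrite /= ltz_nat; apply/ssrnat.ltP; exact: Pos2Nat.is_pos. Qed.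

Lemma zcB a b : zc (a - b)%Z = zc a - zc b.
Proof. by rewrite /zc (_ : (a - b)%Z = (a - b)%R) // !rmorphB. Qed.

Lemma zc_le a b : Z.leb a b -> zc a <= zc b.
Proof.
move=> h; rewrite -subr_ge0 -zcB /zc ler0z; apply: int_of_Z_ge0.
by apply/Z.leb_le; move/Z.leb_le: h; lia.
Qed.
Lemma zc_lt a b : Z.ltb a b -> zc a < zc b.
Proof.
move=> h; rewrite -subr_gt0 -zcB /zc ltr0z; apply: int_of_Z_gt0.
by apply/Z.ltb_lt; move/Z.ltb_lt: h; lia.
Qed.
Lemma zc_pos b : Z.ltb 0 b -> 0 < zc b.
Proof. by move=> h; rewrite -zc0; apply: zc_lt. Qed.
Lemma zc_neq0 b : Z.ltb 0 b -> zc b != 0.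
Proof. by move/zc_pos/lt0r_neq0. Qed.
Lemma zc_real a : zc a \is Num.real.
Proof. by rewrite /zc rpred_int. Qed.
Lemma zc_norm a : `|zc a| = zc (Z.abs a).
Proof. rewrite /zc -intr_norm; congr (_ %:~R); case: a => //= p; rewrite NegzE normrN prednK //; apply/ssrnat.ltP; exact: Pos2Nat.is_pos. Qed.

Lemma frac_le a b c d : Z.ltb 0 b -> Z.ltb 0 d -> Z.leb (a * d) (c * b) -> zc a / zc b <= zc c / zc d.
Proof.
move=> hb hd h; rewrite ler_pdivrMr ?zc_pos // mulrAC ler_pdivlMr ?zc_pos // -!zcM.
exact: zc_le.
Qed.
Lemma frac_lt a b c d : Z.ltb 0 b -> Z.ltb 0 d -> Z.ltb (a * d) (c * b) -> zc a / zc b < zc c / zc d.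
Proof.
move=> hb hd h; rewrite ltr_pdivrMr ?zc_pos // mulrAC ltr_pdivlMr ?zc_pos // -!zcM.
exact: zc_lt.
Qed.
Lemma frac_add a b c d : Z.ltb 0 b -> Z.ltb 0 d -> zc a / zc b + zc c / zc d = zc (a * d + c * b) / zc (b * d).
Proof. move=> hb hd; rewrite zcD !zcM; field; by rewrite !zc_neq0. Qed.
Lemma frac_norm a b : Z.ltb 0 b -> `|zc a / zc b| = zc (Z.abs a) / zc b.
Proof. by move=> hb; rewrite normrM normfV zc_norm (gtr0_norm (zc_pos _ hb)). Qed.
Lemma frac_mul a b c d : zc a / zc b * (zc c / zc d) = zc (a * c) / zc (b * d).
Proof. by rewrite !zcM invfM; ring. Qed.

Lemma natr_zc n : (n%:R : C) = zc (Z.of_nat n).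
Proof.
rewrite /zc pmulrn; congr intmul; case: n => //= n.
by rewrite SuccNat2Pos.id_succ.
Qed.

Fixpoint dd (x y : C) (l : seq Z) : C := if l is a :: l' then ev x l' + y * dd x y l' else 0.
Lemma dd_diff x y l : ev x l - ev y l = (x - y) * dd x y l.
Proof. elim: l => [|a l IH] /=; first by rewrite subrr mulr0. rewrite (_ : zc a + x * ev x l - (zc a + y * ev y l) = (x - y) * ev x l + y * (ev x l - ev y l)); last by ring. rewrite IH; ring. Qed.
Lemma dd_same z l : dd z z l = ev z (ddl l).
Proof. elim: l => [|a l IH] //=; by rewrite ev_add ev_cons0 IH. Qed.
Lemma ev_absl_ge0 M l : 0 <= M -> 0 <= ev M (absl l).
Proof.
move=> hM; elim: l => [|a l IH] //=; apply: addr_ge0; last exact: mulr_ge0.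
rewrite -zc0; apply: zc_le; apply/Z.leb_le; lia.
Qed.
Lemma ev_bound x M l : `|x| <= M -> `|ev x l| <= ev M (absl l).
Proof.
move=> hx; elim: l => [|a l IH] /=; first by rewrite normr0.
apply: (le_trans (ler_normD _ _)); rewrite zc_norm lerD2l normrM.
by apply: ler_pM.
Qed.
Lemma dd_bound x y M l : `|x| <= M -> `|y| <= M -> `|dd x y l| <= ev M (ddl (absl l)).
Proof.
move=> hx hy; elim: l => [|a l IH] /=; first by rewrite normr0.
rewrite ev_add ev_cons0; apply: (le_trans (ler_normD _ _)); apply: lerD; first exact: ev_bound.
by rewrite normrM; apply: ler_pM.
Qed.
Lemma dd_diff_bound x y z M r l : `|x| <= M -> `|y| <= M -> `|z| <= M ->
  `|x - z| <= r -> `|y - z| <= r -> `|dd x y l - dd z z l| <= r * ev M (Klst l).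
Proof.
move=> hx hy hz hxz hyz; elim: l => [|a l IH] /=; first by rewrite subrr normr0 mulr0.
rewrite ev_add ev_scale ev_cons0 (_ : zc 2 = 2); last by rewrite /zc.
have -> : ev x l + y * dd x y l - (ev z l + z * dd z z l) =
  (ev x l - ev z l) + y * (dd x y l - dd z z l) + (y - z) * dd z z l by ring.
rewrite dd_diff.
have h1 : `|(x - z) * dd x z l| <= r * ev M (ddl (absl l)).
  by rewrite normrM; apply: ler_pM => //; exact: dd_bound.
have h2 : `|y * (dd x y l - dd z z l)| <= M * (r * ev M (Klst l)).
  by rewrite normrM; apply: ler_pM.
have h3 : `|(y - z) * dd z z l| <= r * ev M (ddl (absl l)).
  by rewrite normrM; apply: ler_pM => //; exact: dd_bound.
apply: (le_trans (ler_normD _ _)); apply: (le_trans (lerD (ler_normD _ _) h3)).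
apply: (le_trans (lerD (lerD h1 h2) (lexx _))).
set L := (X in X <= _); set R := (X in _ <= X); have -> : L = R by rewrite /L /R; ring.
by [].
Qed.

Lemma uniq_root x y z M r l : ev x l = 0 -> ev y l = 0 -> `|x| <= M -> `|y| <= M -> `|z| <= M ->
  `|x - z| <= r -> `|y - z| <= r -> r * ev M (Klst l) < `|ev z (ddl l)| -> x = y.
Proof.
move=> ex ey hx hy hz hxz hyz hlt; case: (eqVneq x y) => // hne; exfalso.
have hd : dd x y l = 0.
  have := dd_diff x y l; rewrite ex ey subrr => /esym /eqP; rewrite mulf_eq0 subr_eq0 (negPf hne) /=.
  by move/eqP.
have hb := @dd_diff_bound x y z M r l hx hy hz hxz hyz; rewrite hd sub0r normrN dd_same in hb.
by have := lt_le_trans hlt hb; rewrite ltxx.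
Qed.

Lemma cmul (a b c e : C) : (a + b * 'i) * (c + e * 'i) = (a * c - b * e) + (a * e + b * c) * 'i.
Proof.
have hi : 'i * 'i = -1 :> C by rewrite -expr2 sqrCi.
transitivity (a * c + (a * e + b * c) * 'i + b * e * ('i * 'i)); first by ring.
rewrite hi; ring.
Qed.

Lemma gh_ok A B N l : Z.ltb 0 N ->
  ev ((zc A + zc B * 'i) / zc N) l = (zc (gh A B N l).1.1 + zc (gh A B N l).1.2 * 'i) / zc (gh A B N l).2
  /\ Z.ltb 0 (gh A B N l).2.
Proof.
move=> hN; elim: l => [|c l IH] /=; first by rewrite zc0 zc1 mul0r addr0 mul0r.
case: (gh A B N l) IH => [[p q] D] /= [IH hD]; split; last first.
  by apply/Z.ltb_lt; move/Z.ltb_lt: hD; move/Z.ltb_lt: hN; nia.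
rewrite IH !zcB !zcD !zcM.
have hn : zc N != 0 by exact: zc_neq0.
have hd : zc D != 0 by exact: zc_neq0.
rewrite (_ : (zc A + zc B * 'i) / zc N * ((zc p + zc q * 'i) / zc D) = ((zc A + zc B * 'i) * (zc p + zc q * 'i)) / (zc N * zc D)); last by rewrite invfM; ring.
rewrite cmul; field; by apply/andP; split.
Qed.

Lemma norm_ge_Re (p q D : Z) : Z.ltb 0 D -> zc (Z.abs p) / zc D <= `|(zc p + zc q * 'i) / zc D|.
Proof.
move=> hD; rewrite -frac_norm //.
have hre : 'Re ((zc p + zc q * 'i) / zc D) = zc p / zc D.
  rewrite mulrDl (mulrC (zc q)) -mulrA Re_rect //; by rewrite rpred_div ?zc_real.
rewrite -hre; exact: (leif_normC_Re_Creal _).1.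
Qed.

Definition z0C : C := (zc (-99) + zc 14 * 'i) / zc 100.
Definition MC : C := (zc 101 + zc 0 * 'i) / zc 100.
Definition rC : C := zc 26 / zc 10000.

Lemma F6 : rC * ev MC (Klst phiZ) < `|ev z0C (ddl phiZ)|.
Proof.
have [e1 h1] := @gh_ok 101 0 100 (Klst phiZ) isT.
have [e2 h2] := @gh_ok (-99) 14 100 (ddl phiZ) isT.
rewrite /MC /z0C e1 e2; apply: (lt_le_trans _ (norm_ge_Re _ _ _ h2)).
have -> : (gh 101 0 100 (Klst phiZ)).1.2 = 0%Z by vm_compute.
rewrite zc0 mul0r addr0 /rC frac_mul; apply: frac_lt; [by vm_compute | by [] | by vm_compute].
Qed.
End Num5.


Section Num6.
Variable C : numClosedFieldType.
Local Notation zc := (zc C).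
Local Notation ev := (@ev C).

Lemma zcX a n : zc a ^+ n = zc (Zpower_nat a n).
Proof. elim: n => [|n IH]; first by rewrite expr0 zc1. by rewrite exprS IH -zcM. Qed.

Definition cpC : C := (zc (-99) + zc (-14) * 'i) / zc 100.

Lemma conj_gauss a b n : ((zc a + zc b * 'i) / zc n)^* = (zc a + zc (- b) * 'i) / zc n.
Proof. rewrite fmorph_div rmorphD rmorphM /= conjCi zcN. rewrite (zc_conj C n) (zc_conj C a) (zc_conj C b); ring. Qed.

Lemma cpC_conj : cpC^* = z0C C.
Proof. by rewrite /cpC conj_gauss. Qed.

Lemma zc_comb a b c d : zc a * zc b + zc c * zc d = zc (a * b + c * d).
Proof. by rewrite zcD !zcM. Qed.
Lemma zc_comb3 a b c : zc a * zc b + zc c = zc (a * b + c).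
Proof. by rewrite zcD !zcM. Qed.

Lemma norm_gauss_le (x y : C) : `|x + y * 'i| <= `|x| + `|y|.
Proof. by apply: (le_trans (ler_normD _ _)); rewrite normrM normCi mulr1. Qed.

Lemma N1_gen (P Q D E : Z) (delta : C) : Z.ltb 0 D -> Z.ltb 0 E ->
  Z.leb ((1 * (D * 100 * (D * 100)) + (Z.abs (- P * 100 + 99 * D) * (D * 100) + Z.abs (- Q * 100 + 14 * D) * (D * 100)) * E) * 10000)
        (22 * (E * (D * 100 * (D * 100)))) ->
  `|delta - (- zc P / zc D - zc Q / zc D * 'i)| < 1 / zc E ->
  `|delta - cpC| < zc 22 / zc 10000.
Proof.
move=> hD hE hZ h.
have hD0 := @zc_neq0 C D hD.
have e : delta - cpC = (delta - (- zc P / zc D - zc Q / zc D * 'i)) +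
   ((zc (- P) * zc 100 + zc 99 * zc D) / (zc D * zc 100) + (zc (- Q) * zc 100 + zc 14 * zc D) / (zc D * zc 100) * 'i).
  rewrite /cpC !zcN; field; exact: hD0.
rewrite e !zc_comb -zcM.
have hDD : Z.ltb 0 (D * 100) by apply/Z.ltb_lt; move/Z.ltb_lt: hD; lia.
apply: (le_lt_trans (ler_normD _ _)).
apply: (lt_le_trans (ltr_leD h (norm_gauss_le _ _))) => //.
have hED : Z.ltb 0 (E * (D * 100)) by apply/Z.ltb_lt; move/Z.ltb_lt: hD; move/Z.ltb_lt: hE; nia.
have hD2 : Z.ltb 0 (D * 100 * (D * 100)) by apply/Z.ltb_lt; move/Z.ltb_lt: hD; nia.
have hEDD : Z.ltb 0 (E * (D * 100 * (D * 100))) by apply/Z.ltb_lt; move/Z.ltb_lt: hD; move/Z.ltb_lt: hE; nia.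
rewrite !frac_norm // -zc1 !frac_add //.
by apply: frac_le.
Qed.

Lemma N1 (delta : C) :
  `|delta - (- (990 * 1000 + 399) / 10 ^+ 6 - (138 * 1000 + 239) / 10 ^+ 6 * 'i)| < 1 / 10 ^+ 5 ->
  `|delta - cpC| < zc 22 / zc 10000.
Proof.
do 6 rewrite natr_zc. rewrite !zcX !zc_comb3.
by apply: N1_gen; vm_compute.
Qed.

Lemma gauss_mul_conj a b n : ((zc a + zc b * 'i) / zc n) * ((zc a + zc (- b) * 'i) / zc n) = zc (a * a + b * b) / zc (n * n).
Proof. rewrite mulf_div cmul !zcN zcD !zcM; ring. Qed.

Lemma z0_sq : `|z0C C| ^+ 2 = zc ((-99) * (-99) + 14 * 14) / zc (100 * 100).
Proof. by rewrite normCK /z0C conj_gauss gauss_mul_conj. Qed.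

Lemma z0_le1 : `|z0C C| <= 1.
Proof. rewrite -(expr_le1 (n:=2)) // z0_sq -(divr1 1) -zc1; apply: frac_le; vm_compute; reflexivity. Qed.

Lemma z0_ge : zc 99 / zc 100 <= `|z0C C|.
Proof.
rewrite -(ler_pXn2r (n:=2)) // ?nnegrE ?normr_ge0 //; last by apply: divr_ge0; apply: ltW; apply: zc_pos.
by rewrite z0_sq expr2 frac_mul; apply: frac_le.
Qed.

Lemma norm_cpC : `|cpC| = `|z0C C|.
Proof. by rewrite -norm_conjC cpC_conj. Qed.

Lemma cp_z0 : cpC * z0C C = zc (99 * 99 + 14 * 14) / zc (100 * 100).
Proof. by rewrite /cpC /z0C (_ : zc 14 = zc (- (-14))) // gauss_mul_conj. Qed.

Lemma pos_small (w : C) : w \is Num.real -> `|w| < 1 -> 0 < 1 + w.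
Proof.
move=> hw hl.
have hn : - `|w| <= w by have := lexx `|w|; rewrite real_ler_norml // => /andP[].
apply: (@lt_le_trans _ _ (1 - `|w|)); first by rewrite subr_gt0.
by rewrite lerD2l.
Qed.

Lemma real_conj_sum (y : C) : y + y^* \is Num.real.
Proof. by apply/CrealP; rewrite rmorphD /= conjCK addrC. Qed.

Lemma frac_mulz a b c : zc a / zc b * zc c = zc (a * c) / zc b.
Proof. by rewrite zcM; ring. Qed.
Lemma frac_int a b c : Z.ltb 0 b -> a = (c * b)%Z -> zc a / zc b = zc c.
Proof. by move=> hb ->; rewrite zcM mulfK // zc_neq0. Qed.

Lemma one_sub_frac a b : Z.ltb 0 b -> 1 - zc a / zc b = zc (b - a) / zc b.
Proof. by move=> hb; rewrite zcB; field; exact: zc_neq0. Qed.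

Lemma cp_plus_z0 : cpC + z0C C = zc (-198) / zc 100.
Proof.
rewrite /cpC /z0C (_ : zc (-198) = zc (-99) + zc (-99)); last by rewrite -zcD.
rewrite (_ : zc 14 = - zc (-14)); last by rewrite -zcN.
ring.
Qed.

Lemma cp_minus_z0 : cpC - z0C C = zc (-28) / zc 100 * 'i.
Proof.
rewrite /cpC /z0C (_ : zc (-28) = zc (-14) + zc (-14)); last by rewrite -zcD.
rewrite (_ : zc 14 = - zc (-14)); last by rewrite -zcN.
ring.
Qed.

Lemma analytic (delta : C) : ev delta phiZ = 0 -> `|delta - cpC| < zc 22 / zc 10000 ->
  [/\ delta^* != delta, delta * delta^* = 1,
      0 < ev (delta + delta^-1) [:: 397%Z; 200%Z] & 0 < ev (delta + delta^-1) [:: (-395)%Z; (-200)%Z]].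
Proof.
move=> hroot h.
set r0 := zc 22 / zc 10000.
have hz1 := z0_le1; have hzg := z0_ge.
have hconj : `|delta^* - z0C C| = `|delta - cpC|.
  by rewrite -cpC_conj -rmorphB norm_conjC.
have hne : delta^* != delta.
  apply/eqP => he.
  have h2 : `|cpC - z0C C| < r0 + r0.
    rewrite (_ : cpC - z0C C = (cpC - delta) + (delta - z0C C)); last by ring.
    apply: (le_lt_trans (ler_normD _ _)); rewrite distrC -{2}he hconj.
    by apply: ltrD.
  move: h2; rewrite cp_minus_z0 normrM normCi mulr1 frac_norm // /r0 frac_add //.
  move=> h2; have hle : (zc (22 * 10000 + 22 * 10000) / zc (10000 * 10000) : C) <= zc 28 / zc 100.
    by apply: frac_le; vm_compute; reflexivity.
  by have := lt_le_trans h2 hle; rewrite ltxx.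
have hdl : zc 97 / zc 100 <= `|delta|.
  have h1 : `|cpC| <= `|delta| + `|delta - cpC|.
    by rewrite distrC; have := ler_normD delta (cpC - delta); rewrite addrC subrK.
  have h3 : zc 97 / zc 100 + r0 <= zc 99 / zc 100 by rewrite /r0 frac_add //; apply: frac_le.
  rewrite -(lerD2r `|delta - cpC|); apply: (le_trans _ (le_trans _ h1)); last by rewrite norm_cpC.
  apply: (le_trans (lerD (lexx _) (ltW h))); exact: (le_trans h3 hzg).
have hd0 : delta != 0.
  apply/eqP => hd; move: hdl; rewrite hd normr0 => hle.
  have hp : (0 : C) < zc 97 / zc 100 by apply: divr_gt0; apply: zc_pos.
  by have := lt_le_trans hp hle; rewrite ltxx.
have hdinv : `|delta^-1 - z0C C| <= rC C.
  have e : delta^-1 - z0C C = ((1 - cpC * z0C C) - (delta - cpC) * z0C C) / delta.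
    by field.
  have hn : `|(1 - cpC * z0C C) - (delta - cpC) * z0C C| <= zc 25 / zc 10000.
    apply: (le_trans (ler_normB _ _)).
    rewrite cp_z0 one_sub_frac // frac_norm // normrM.
    have h4 : `|delta - cpC| * `|z0C C| <= r0.
      by rewrite -[r0]mulr1; apply: ler_pM => //; exact: ltW.
    apply: (le_trans (lerD (lexx _) h4)); rewrite /r0 frac_add //; apply: frac_le; vm_compute; reflexivity.
  rewrite e normrM normfV -/(_ / _) ler_pdivrMr ?normr_gt0 //.
  apply: (le_trans hn); apply: (@le_trans _ _ (rC C * (zc 97 / zc 100))).
    by rewrite /rC frac_mul; apply: frac_le; vm_compute; reflexivity.
  by apply: ler_wpM2l; [apply: divr_ge0; apply: ltW; apply: zc_pos | exact: hdl].
have hM : MC C = zc 101 / zc 100 by rewrite /MC zc0 mul0r addr0.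
have h1r : (1 : C) + rC C <= MC C.
  by rewrite hM -[1](divr1) -zc1 /rC frac_add //; apply: frac_le; vm_compute; reflexivity.
have hr0r : r0 <= rC C by rewrite /r0 /rC; apply: frac_le; vm_compute; reflexivity.
have hdM : `|delta| <= MC C.
  apply: (le_trans _ h1r); rewrite (_ : delta = cpC + (delta - cpC)); last by ring.
  apply: (le_trans (ler_normD _ _)); apply: lerD; first by rewrite norm_cpC.
  exact: (le_trans (ltW h) hr0r).
have hdiM : `|delta^-1| <= MC C.
  apply: (le_trans _ h1r); rewrite (_ : delta^-1 = z0C C + (delta^-1 - z0C C)); last by ring.
  by apply: (le_trans (ler_normD _ _)); apply: lerD.
have hz0M : `|z0C C| <= MC C by apply: (le_trans hz1); apply: (le_trans _ h1r); rewrite lerDl; apply: divr_ge0; apply: ltW; apply: zc_pos.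
have hcst : delta^* = delta^-1.
  apply: (@uniq_root C delta^* delta^-1 (z0C C) (MC C) (rC C) phiZ).
  - by rewrite -ev_conj hroot rmorph0.
  - have := @ev_rev C delta hd0 phiZ; rewrite (_ : rev phiZ = phiZ); last by vm_compute.
    rewrite hroot => /esym /eqP; rewrite mulf_eq0 expf_eq0 (negPf hd0) andbF /=; by move/eqP.
  - by rewrite norm_conjC.
  - exact: hdiM.
  - exact: hz0M.
  - by rewrite hconj; apply: (le_trans (ltW h) hr0r).
  - exact: hdinv.
  - exact: F6.
have hdd : delta * delta^* = 1 by rewrite hcst divff.
set y := delta - cpC.
have ht : delta + delta^-1 = (y + y^*) + zc (-198) / zc 100.
  by rewrite -hcst /y rmorphB /= cpC_conj -cp_plus_z0; ring.
have hx : `|y + y^*| <= r0 + r0.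
  by apply: (le_trans (ler_normD _ _)); rewrite norm_conjC; apply: lerD; apply: ltW.
have hsmall : `|zc 200 * (y + y^*)| < 1.
  rewrite normrM (gtr0_norm (@zc_pos C 200 isT)).
  apply: (le_lt_trans (ler_wpM2l (ltW (@zc_pos C 200 isT)) hx)).
  rewrite /r0 frac_add // mulrC frac_mulz.
  rewrite (_ : (1 : C) = zc 1 / zc 1); last by rewrite zc1 divr1.
  by apply: frac_lt; vm_compute; reflexivity.
have hreal : zc 200 * (y + y^*) \is Num.real by rewrite rpredM ?zc_real ?real_conj_sum.
split => //.
- rewrite /= mulr0 addr0 ht.
  rewrite (_ : zc 397 + (y + y^* + zc (-198) / zc 100) * zc 200 = 1 + zc 200 * (y + y^*)).
    exact: pos_small.
  rewrite mulrDl frac_mulz (@frac_int (-198 * 200) 100 (-396) isT erefl).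
  rewrite (_ : zc 397 = 1 - zc (-396)); first by ring.
  by rewrite -zc1 -zcB.
- rewrite /= mulr0 addr0 ht.
  rewrite (_ : zc (-395) + (y + y^* + zc (-198) / zc 100) * zc (-200) = 1 + - (zc 200 * (y + y^*))).
    by apply: pos_small; rewrite ?rpredN ?normrN.
  rewrite mulrDl frac_mulz (@frac_int (-198 * -200) 100 396 isT erefl).
  rewrite (_ : zc (-200) = - zc 200); last by rewrite -zcN.
  rewrite (_ : zc (-395) = 1 - zc 396); first by ring.
  by rewrite -zc1 -zcB.
Qed.
End Num6.


Theorem proposition3p1 (C : numClosedFieldType) (delta : C) :
  root (map_poly (fun z : int => z%:~R) phi14) delta ->
  `|delta - (- (990 * 1000 + 399) / 10 ^+ 6 - (138 * 1000 + 239) / 10 ^+ 6 * 'i)|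
     < 1 / 10 ^+ 5 ->
  exists (F : 'M[int]_22) (sigma : 'cV[C]_22),
    [/\ lattice_aut F,
        char_poly F = ('X - 1) ^+ 8 * phi14,
        k3formC sigma sigma = 0 /\ 0 < k3formC sigma (map_mx (fun z : C => z^*) sigma)
      & map_mx (fun z : int => z%:~R) F *m sigma = delta *: sigma].
Proof.
move=> hr hc.
have hroot := @ev_phi C delta hr.
have [hne hdd hu1 hu2] := @analytic C delta hroot (@N1 C delta hc).
have E := @eigen C delta hr.
have hd0 : delta != 0.
  apply/eqP => h0; move: hdd; rewrite h0 mul0r => /eqP; by rewrite eq_sym oner_eq0.
have hc' : delta^* = delta^-1 by apply: (mulfI hd0); rewrite hdd divff.
exists Fm, (sigma C delta); split; [exact: Fm_aut | exact: charF | split | exact: E].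
- have := @form_isom C (sigma C delta) (sigma C delta); rewrite E form_scale => /eqP.
  rewrite -subr_eq0 -{2}[k3formC _ _]mul1r -mulrBl mulf_eq0 => /orP[|/eqP //].
  rewrite subr_eq0 => /eqP hsq; exfalso; move/eqP: hne; apply.
  rewrite hc'; apply: (mulfI hd0); by rewrite divff.
- have := @H_eq C delta hd0 hc'; rewrite /sigmab => ->; exact: R_pos.
Qed.
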